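(* Let $a>0$, let $v:\mathbb{R}\to[v_0,\infty)$ be continuously differentiable with $v_0>0$, fix $r>a/v_0$, let $C=C([-r,0],\mathbb{R})$ with the maximum norm and $C^1=C^1([-r,0],\mathbb{R})$ with the norm $|\phi|_1=\max|\phi|+\max|\phi'|$. Let $\delta:C\to(0,r)$ be the map assigning to $\phi\in C$ the unique $u\in(0,r)$ with $a=\int_{-u}^0 v(\phi(s))\,ds$; it is continuously differentiable with derivative $D\delta(\phi)\chi=-\int_{-\delta(\phi)}^0 v'(\phi(s))\chi(s)\,ds\,/\,v(\phi(-\delta(\phi)))$. For $\phi\in C^1$ and $\chi\in C$ define $$D_eE(\phi)\chi=\chi(-\delta(\phi))-\phi'(-\delta(\phi))\,D\delta(\phi)\chi .$$ Then the map $C^1\times C\ni(\phi,\chi)\mapsto D_eE(\phi)\chi\in\mathbb{R}$ is continuous.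
   Context: $D_eE(\phi):C\to\mathbb{R}$ is the linear extension to $C$ of the derivative of the continuously differentiable map $E:C^1\to\mathbb{R}$, $E(\phi)=\phi(-\delta(\phi))$. *)

(* Defs.v *)
From Stdlib Require Import Reals Lra.
From Coquelicot Require Import Coquelicot.
Open Scope R_scope.

Definition supnorm (r : R) (f : R -> R) : R :=
  real (Lub_Rbar (fun y => exists s, -r <= s <= 0 /\ y = Rabs (f s))).

Definition c1norm (r : R) (f : R -> R) : R :=
  supnorm r f + supnorm r (Derive f).

(* Elements of C([-r,0],R), represented by continuous functions R -> R
   (every element of C([-r,0]) extends to one; only restrictions matter). *)
Definition isC (f : R -> R) : Prop := forall s, continuous f s.

Definition isC1 (f : R -> R) : Prop :=
  (forall s, ex_derive f s) /\ (forall s, continuous (Derive f) s).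

Definition Ddelta (v : R -> R) (delta : (R -> R) -> R) (phi chi : R -> R) : R :=
  - RInt (fun s => Derive v (phi s) * chi s) (- delta phi) 0 / v (phi (- delta phi)).

Definition DeE (v : R -> R) (delta : (R -> R) -> R) (phi chi : R -> R) : R :=
  chi (- delta phi) - Derive phi (- delta phi) * Ddelta v delta phi chi.

(* Main.v *)
Require Import Defs.
From Stdlib Require Import Reals Lra.
From Coquelicot Require Import Coquelicot.
Open Scope R_scope.

Lemma cont_pt_of (g : R -> R) x : continuous g x -> continuity_pt g x.
Proof. intros H. apply (proj2 (continuity_pt_filterlim g x)). exact H. Qed.

Lemma bound_cont (g : R -> R) a b : a <= b -> (forall s, a <= s <= b -> continuous g s) ->
  exists M, 0 <= M /\ forall s, a <= s <= b -> Rabs (g s) <= M.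
Proof.
  intros Hab Hc.
  destruct (continuity_ab_maj (fun s => Rabs (g s)) a b Hab) as [Mx [HM HMx]].
  { intros c Hc'. apply cont_pt_of. apply continuous_Rabs_comp. auto. }
  exists (Rabs (g Mx)). split; [apply Rabs_pos | auto].
Qed.

Lemma sup_bound r g : 0 <= r -> (forall s, -r <= s <= 0 -> continuous g s) ->
  forall s, -r <= s <= 0 -> Rabs (g s) <= supnorm r g.
Proof.
  intros Hr Hc s Hs.
  destruct (bound_cont g (-r) 0) as [M [HM0 HM]]; try lra; auto.
  unfold supnorm.
  pose proof (Lub_Rbar_correct (fun y => exists s, -r <= s <= 0 /\ y = Rabs (g s))) as HL.
  revert HL. generalize (Lub_Rbar (fun y => exists s, -r <= s <= 0 /\ y = Rabs (g s))).
  intros l [Hub Hlub].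
  assert (H1 : Rbar_le (Rabs (g s)) l) by (apply Hub; exists s; split; auto).
  assert (H2 : Rbar_le l M).
  { apply Hlub. intros y [t [Ht ->]]. simpl. apply HM; auto. }
  destruct l; simpl in *; try contradiction; auto.
Qed.

Lemma RInt_abs_bound f a b M : (forall x, continuous f x) ->
  (forall x, Rmin a b <= x <= Rmax a b -> Rabs (f x) <= M) ->
  Rabs (RInt f a b) <= Rabs (b - a) * M.
Proof.
  intros Hc Hb. apply (norm_RInt_le_const_abs f a b); auto.
  apply (RInt_correct (V := R_CompleteNormedModule)), ex_RInt_continuous; auto.
Qed.

Lemma RInt_lower f a b v0 : (forall x, continuous f x) -> (forall x, v0 <= f x) ->
  v0 * Rabs (b - a) <= Rabs (RInt f a b).
Proof.
  intros Hc Hv.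
  assert (key : forall a b, a <= b -> (b - a) * v0 <= RInt f a b).
  { intros x y Hxy.
    replace ((y - x) * v0) with (RInt (fun _ => v0) x y).
    - apply RInt_le; auto. apply ex_RInt_const. apply (ex_RInt_continuous (V := R_CompleteNormedModule)); auto.
    - rewrite RInt_const. reflexivity. }
  destruct (Rle_dec a b) as [Hab|Hab].
  - rewrite Rabs_right by lra. eapply Rle_trans; [|apply Rle_abs].
    rewrite Rmult_comm. apply key; auto.
  - rewrite <- opp_RInt_swap by (apply (ex_RInt_continuous (V := R_CompleteNormedModule)); auto).
    change (opp (RInt f b a)) with (- RInt f b a). rewrite Rabs_Ropp.
    rewrite Rabs_left by lra. eapply Rle_trans; [|apply Rle_abs].
    replace (v0 * - (b - a)) with ((a - b) * v0) by ring. apply key; lra.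
Qed.


Lemma lim_plus {T} {F : (T -> Prop) -> Prop} {FF : Filter F} (f g : T -> R) l m :
  filterlim f F (locally l) -> filterlim g F (locally m) ->
  filterlim (fun x => f x + g x) F (locally (l + m)).
Proof. intros Hf Hg. apply (filterlim_comp_2 f g Rplus Hf Hg).
  apply (filterlim_plus (K := R_AbsRing) (V := R_NormedModule) l m). Qed.

Lemma lim_opp {T} {F : (T -> Prop) -> Prop} {FF : Filter F} (f : T -> R) l :
  filterlim f F (locally l) -> filterlim (fun x => - f x) F (locally (- l)).
Proof. intros Hf. apply (filterlim_comp _ _ _ f Ropp F (locally l) (locally (-l)) Hf).
  apply (filterlim_opp (K := R_AbsRing) (V := R_NormedModule) l). Qed.

Lemma lim_minus {T} {F : (T -> Prop) -> Prop} {FF : Filter F} (f g : T -> R) l m :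
  filterlim f F (locally l) -> filterlim g F (locally m) ->
  filterlim (fun x => f x - g x) F (locally (l - m)).
Proof. intros Hf Hg. apply lim_plus; auto. apply lim_opp; auto. Qed.

Lemma lim_mult {T} {F : (T -> Prop) -> Prop} {FF : Filter F} (f g : T -> R) l m :
  filterlim f F (locally l) -> filterlim g F (locally m) ->
  filterlim (fun x => f x * g x) F (locally (l * m)).
Proof. intros Hf Hg. apply (filterlim_comp_2 f g Rmult Hf Hg).
  apply (filterlim_mult (K := R_AbsRing) l m). Qed.

Lemma lim_inv {T} {F : (T -> Prop) -> Prop} {FF : Filter F} (f : T -> R) l :
  l <> 0 -> filterlim f F (locally l) -> filterlim (fun x => / f x) F (locally (/ l)).
Proof. intros Hl Hf. apply (filterlim_comp _ _ _ f Rinv F (locally l) (locally (/ l)) Hf).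
  apply (filterlim_Rbar_inv (Finite l)). intro H; apply Hl; injection H; auto. Qed.

Definition NF (r : R) (phi chi : R -> R) (P : (R -> R) * (R -> R) -> Prop) : Prop :=
  exists eta, 0 < eta /\ forall psi omega, isC1 psi -> isC omega ->
    c1norm r (fun s => psi s - phi s) < eta ->
    supnorm r (fun s => omega s - chi s) < eta -> P (psi, omega).

#[global] Instance NF_filter (r : R) (phi chi : R -> R) : Filter (NF r phi chi).
Proof.
  constructor.
  - exists 1. split; [lra | auto].
  - intros P Q [e1 [He1 H1]] [e2 [He2 H2]]. exists (Rmin e1 e2). split.
    + apply Rmin_pos; auto.
    + intros psi omega H3 H4 H5 H6. pose proof (Rmin_l e1 e2). pose proof (Rmin_r e1 e2).
      split; [apply H1 | apply H2]; auto; lra.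
  - intros P Q HPQ [e [He H]]. exists e. split; auto.
Qed.

Lemma isC1_C f : isC1 f -> isC f.
Proof. intros [Hd _] x. apply (ex_derive_continuous (K := R_AbsRing) (V := R_NormedModule)). auto. Qed.

Lemma basic r phi chi (hr : 0 <= r) (Hphi : isC1 phi) (Hchi : isC chi) e : 0 < e ->
  NF r phi chi (fun p => isC1 (fst p) /\ isC (snd p) /\ forall s, -r <= s <= 0 ->
    Rabs (fst p s - phi s) < e /\ Rabs (Derive (fst p) s - Derive phi s) < e /\
    Rabs (snd p s - chi s) < e).
Proof.
  intros He. exists e. split; auto. intros psi omega Hpsi Hom H1 H2. simpl.
  split; auto. split; auto.
  assert (Hsn : forall g, (forall s, continuous g s) -> 0 <= supnorm r g).
  { intros g Hg. eapply Rle_trans; [apply (Rabs_pos (g 0))|].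
    apply sup_bound; auto; lra. }
  assert (C1 : forall s, continuous (fun s : R => psi s - phi s) s).
  { intros s. apply (continuous_minus psi phi); apply isC1_C; auto. }
  assert (C2 : forall s, continuous (Derive (fun s : R => psi s - phi s)) s).
  { intros s. apply continuous_ext with (f := fun t => Derive psi t - Derive phi t).
    - intros t. rewrite Derive_minus; auto. apply Hpsi. apply Hphi.
    - apply (continuous_minus (Derive psi) (Derive phi)); [apply Hpsi | apply Hphi]. }
  assert (C3 : forall s, continuous (fun s : R => omega s - chi s) s).
  { intros s. apply (continuous_minus omega chi); auto. }
  pose proof (Hsn _ C1). pose proof (Hsn _ C2). unfold c1norm in H1.
  intros s Hs. split; [|split].
  - eapply Rle_lt_trans. apply (sup_bound r (fun s : R => psi s - phi s)); auto. lra.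
  - rewrite <- Derive_minus by (apply Hpsi || apply Hphi).
    eapply Rle_lt_trans. apply (sup_bound r (Derive (fun s : R => psi s - phi s))); auto. lra.
  - eapply Rle_lt_trans. apply (sup_bound r (fun s : R => omega s - chi s)); auto. lra.
Qed.

Theorem proposition2p2
  (a v0 r : R) (v : R -> R) (delta : (R -> R) -> R)
  (ha : 0 < a) (hv0 : 0 < v0)
  (hvd : forall x, ex_derive v x)
  (hvc : forall x, continuous (Derive v) x)
  (hvb : forall x, v0 <= v x)
  (hr : a / v0 < r)
  (hdelta : forall phi, isC phi ->
     0 < delta phi < r /\ RInt (fun s => v (phi s)) (- delta phi) 0 = a) :
  forall phi chi, isC1 phi -> isC chi ->
  forall eps, 0 < eps -> exists eta, 0 < eta /\
    forall psi omega, isC1 psi -> isC omega ->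
      c1norm r (fun s => psi s - phi s) < eta ->
      supnorm r (fun s => omega s - chi s) < eta ->
      Rabs (DeE v delta psi omega - DeE v delta phi chi) < eps.
Proof.
  intros phi chi Hphi Hchi eps Heps.
  assert (hr0 : 0 < r).
  { apply Rlt_trans with (a / v0); auto. apply Rdiv_lt_0_compat; auto. }
  destruct (hdelta phi (isC1_C _ Hphi)) as [[hd0 hdr] hdI].
  set (d := delta phi) in *.
  destruct (bound_cont phi (-r) 0) as [Mphi [HMphi0 HMphi]]; try lra.
  { intros; apply (isC1_C _ Hphi). }
  destruct (bound_cont chi (-r) 0) as [Mchi [HMchi0 HMchi]]; try lra.
  { intros; apply Hchi. }
  set (K := Mphi + 1).
  destruct (bound_cont (Derive v) (-K) K) as [Mv1 [HMv10 HMv1]]; try (unfold K; lra).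
  { intros; apply hvc. }
  assert (hvC : forall x, continuous v x) by (intros; apply (ex_derive_continuous (K := R_AbsRing) (V := R_NormedModule)); auto).
  set (F := NF r phi chi).
  assert (HB := basic r phi chi (Rlt_le _ _ hr0) Hphi Hchi).
  assert (HD0 : F (fun p => 0 < delta (fst p) < r)).
  { apply filter_imp with (2 := HB 1 Rlt_0_1). intros [psi omega] [Hpsi _].
    apply (hdelta psi (isC1_C _ Hpsi)). }
  assert (FD : filterlim (fun p => delta (fst p)) F (locally d)).
  { apply filterlim_locally. intros e.
    assert (Hw : 0 < e * v0 / r).
    { apply Rdiv_lt_0_compat; auto. apply Rmult_lt_0_compat; auto. apply cond_pos. }
    destruct (@Heine_cor2 v (-K) K (fun x _ => cont_pt_of v x (hvC x)) (mkposreal _ Hw))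
      as [d1 Hd1].
    assert (He1 : 0 < Rmin 1 d1) by (apply Rmin_pos; [lra | apply cond_pos]).
    apply filter_imp with (2 := HB _ He1). intros [psi omega] [Hpsi [Hom Hb]].
    simpl in Hb |- *. change (Rabs (delta psi - d) < e).
    destruct (hdelta psi (isC1_C _ Hpsi)) as [[h1 h2] hI].
    set (d' := delta psi) in *.
    assert (Cpsi : forall x, continuous (fun s => v (psi s)) x).
    { intros x. apply continuous_comp; auto. apply (isC1_C _ Hpsi). }
    assert (Cphi : forall x, continuous (fun s => v (phi s)) x).
    { intros x. apply continuous_comp; auto. apply (isC1_C _ Hphi). }
    assert (Ch : RInt (fun s => v (psi s)) (- d') (- d) + RInt (fun s => v (psi s)) (- d) 0 = a).
    { rewrite <- hI. apply (RInt_Chasles (V := R_CompleteNormedModule));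
      apply (ex_RInt_continuous (V := R_CompleteNormedModule)); auto. }
    assert (Mi : RInt (fun s => v (phi s) - v (psi s)) (- d) 0 =
                 RInt (fun s => v (phi s)) (- d) 0 - RInt (fun s => v (psi s)) (- d) 0).
    { apply (RInt_minus (V := R_CompleteNormedModule));
      apply (ex_RInt_continuous (V := R_CompleteNormedModule)); auto. }
    assert (Lo := RInt_lower (fun s => v (psi s)) (- d') (- d) v0 Cpsi (fun x => hvb _)).
    assert (Up := RInt_abs_bound (fun s => v (phi s) - v (psi s)) (- d) 0 (e * v0 / r)).
    assert (Up' : Rabs (RInt (fun s => v (phi s) - v (psi s)) (- d) 0) <= Rabs (0 - - d) * (e * v0 / r)).
    { apply Up.
      - intros x. apply (continuous_minus (fun s => v (phi s)) (fun s => v (psi s))); auto.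
      - intros x Hx. rewrite Rmin_left in Hx by lra. rewrite Rmax_right in Hx by lra.
        destruct (Hb x ltac:(lra)) as [Hx1 _].
        assert (Hx2 := HMphi x ltac:(lra)).
        pose proof (Rmin_l 1 d1). pose proof (Rmin_r 1 d1).
        apply Rlt_le. apply Hd1.
        + unfold K. apply Rabs_le_between in Hx2. lra.
        + unfold K. apply Rabs_le_between in Hx2.
          rewrite Rabs_minus_sym in Hx1. apply Rabs_lt_between in Hx1. lra.
        + rewrite Rabs_minus_sym. lra. }
    rewrite Mi, hdI in Up'.
    replace (a - RInt (fun s => v (psi s)) (- d) 0) with (RInt (fun s => v (psi s)) (- d') (- d)) in Up' by lra.
    replace (0 - - d) with d in Up' by ring. rewrite (Rabs_right d) in Up' by lra.
    replace (- d - - d') with (d' - d) in Lo by ring.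
    set (w := e * v0 / r) in *.
    assert (Hwr : w * r = e * v0) by (unfold w; field; lra).
    assert (Hlt : v0 * Rabs (d' - d) < v0 * e).
    { assert (Hdw : d * w < w * r) by (rewrite Rmult_comm; apply Rmult_lt_compat_l; lra).
      eapply Rle_lt_trans; [exact Lo|]. eapply Rle_lt_trans; [exact Up'|]. lra. }
    apply Rmult_lt_reg_l in Hlt; auto. }
  assert (Gen : forall (sel : (R -> R) * (R -> R) -> R -> R) (g : R -> R), continuous g (- d) ->
    (forall e, 0 < e -> F (fun p => forall s, -r <= s <= 0 -> Rabs (sel p s - g s) < e)) ->
    filterlim (fun p => sel p (- delta (fst p))) F (locally (g (- d)))).
  { intros sel g Hg Hs.
    apply filterlim_ext with (f := fun p => (sel p (- delta (fst p)) - g (- delta (fst p))) + g (- delta (fst p))).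
    { intros p; ring. }
    replace (g (- d)) with (0 + g (- d)) by ring.
    apply lim_plus.
    - apply filterlim_locally. intros e.
      apply filter_imp with (2 := filter_and _ _ HD0 (Hs e (cond_pos e))).
      intros p [H1 H2]. change (Rabs (sel p (- delta (fst p)) - g (- delta (fst p)) - 0) < e).
      rewrite Rminus_0_r. apply H2. lra.
    - apply (filterlim_comp _ _ _ (fun p => - delta (fst p)) g F (locally (- d))).
      + apply lim_opp. exact FD.
      + exact Hg. }
  assert (L1 : filterlim (fun p => snd p (- delta (fst p))) F (locally (chi (- d)))).
  { apply (Gen (fun p => snd p) chi (Hchi _)). intros e He.
    apply filter_imp with (2 := HB e He). intros p [_ [_ H]] s Hs. apply H; auto. }
  assert (L2 : filterlim (fun p => Derive (fst p) (- delta (fst p))) F (locally (Derive phi (- d)))).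
  { apply (Gen (fun p => Derive (fst p)) (Derive phi) (proj2 Hphi _)). intros e He.
    apply filter_imp with (2 := HB e He). intros p [_ [_ H]] s Hs. apply H; auto. }
  assert (L3 : filterlim (fun p => fst p (- delta (fst p))) F (locally (phi (- d)))).
  { apply (Gen (fun p => fst p) phi (isC1_C _ Hphi _)). intros e He.
    apply filter_imp with (2 := HB e He). intros p [_ [_ H]] s Hs. apply H; auto. }
  assert (L4 : filterlim (fun p => v (fst p (- delta (fst p)))) F (locally (v (phi (- d))))).
  { apply (filterlim_comp _ _ _ (fun p => fst p (- delta (fst p))) v F (locally (phi (- d)))).
    exact L3. apply hvC. }
  assert (LI : filterlim (fun p => RInt (fun s => Derive v (fst p s) * snd p s) (- delta (fst p)) 0) F
                 (locally (RInt (fun s => Derive v (phi s) * chi s) (- d) 0))).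
  { apply filterlim_locally. intros e.
    set (B := Mv1 * (Mchi + 1)).
    assert (HB0 : 0 <= B) by (unfold B; apply Rmult_le_pos; lra).
    assert (He0 := cond_pos e).
    assert (He1 : 0 < e / (4 * r * (Mchi + 1))).
    { apply Rdiv_lt_0_compat; auto. apply Rmult_lt_0_compat; lra. }
    destruct (@Heine_cor2 (Derive v) (-K) K (fun x _ => cont_pt_of _ x (hvc x)) (mkposreal _ He1)) as [d2 Hd2].
    simpl in Hd2.
    set (e2 := e / (4 * r * (Mv1 + 1))).
    assert (He2 : 0 < e2).
    { apply Rdiv_lt_0_compat; auto. apply Rmult_lt_0_compat; lra. }
    assert (He3 : 0 < Rmin 1 (Rmin d2 e2)).
    { apply Rmin_pos; [lra|]. apply Rmin_pos; auto. apply cond_pos. }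
    assert (He4 : 0 < e / (2 * (B + 1))).
    { apply Rdiv_lt_0_compat; auto. lra. }
    pose proof (proj1 (filterlim_locally _ _) FD (mkposreal _ He4)) as FD'.
    apply filter_imp with (2 := filter_and _ _ FD' (HB _ He3)).
    intros [psi omega] [HD [Hpsi [Hom Hb]]]. simpl in HD, Hb |- *.
    change (Rabs (RInt (fun s => Derive v (psi s) * omega s) (- delta psi) 0
                  - RInt (fun s => Derive v (phi s) * chi s) (- d) 0) < e).
    change (Rabs (delta psi - d) < e / (2 * (B + 1))) in HD.
    destruct (hdelta psi (isC1_C _ Hpsi)) as [[h1 h2] _].
    set (d' := delta psi) in *.
    set (f1 := fun s : R => Derive v (psi s) * omega s).
    set (f0 := fun s : R => Derive v (phi s) * chi s).
    assert (Cf1 : forall x, continuous f1 x).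
    { intros x. apply (continuous_mult (K := R_AbsRing) (fun s => Derive v (psi s)) omega).
      - apply continuous_comp; [apply (isC1_C _ Hpsi) | apply hvc].
      - apply Hom. }
    assert (Cf0 : forall x, continuous f0 x).
    { intros x. apply (continuous_mult (K := R_AbsRing) (fun s => Derive v (phi s)) chi).
      - apply continuous_comp; [apply (isC1_C _ Hphi) | apply hvc].
      - apply Hchi. }
    assert (Ch : RInt f1 (- d') (- d) + RInt f1 (- d) 0 = RInt f1 (- d') 0).
    { apply (RInt_Chasles (V := R_CompleteNormedModule));
      apply (ex_RInt_continuous (V := R_CompleteNormedModule)); auto. }
    assert (Mi : RInt (fun s => f1 s - f0 s) (- d) 0 = RInt f1 (- d) 0 - RInt f0 (- d) 0).
    { apply (RInt_minus (V := R_CompleteNormedModule));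
      apply (ex_RInt_continuous (V := R_CompleteNormedModule)); auto. }
    assert (Hpt : forall s, -r <= s <= 0 ->
      Rabs (omega s) <= Mchi + 1 /\ Rabs (Derive v (psi s)) <= Mv1 /\
      Rabs (Derive v (phi s)) <= Mv1 /\
      Rabs (Derive v (psi s) - Derive v (phi s)) < e / (4 * r * (Mchi + 1)) /\
      Rabs (omega s - chi s) < e2).
    { intros s Hs. destruct (Hb s Hs) as [Hx1 [_ Hx3]].
      pose proof (Rmin_l 1 (Rmin d2 e2)). pose proof (Rmin_r 1 (Rmin d2 e2)).
      pose proof (Rmin_l d2 e2). pose proof (Rmin_r d2 e2).
      assert (Hp := HMphi s Hs). assert (Hc := HMchi s Hs).
      assert (Kphi : - K <= phi s <= K) by (unfold K; apply Rabs_le_between in Hp; lra).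
      assert (Kpsi : - K <= psi s <= K).
      { unfold K. apply Rabs_le_between in Hp. apply Rabs_lt_between in Hx1. lra. }
      split; [|split; [|split; [|split]]].
      - replace (omega s) with ((omega s - chi s) + chi s) by ring.
        eapply Rle_trans; [apply Rabs_triang|]. lra.
      - apply HMv1; auto.
      - apply HMv1; auto.
      - apply Hd2; auto. lra.
      - lra. }
    assert (B1 : Rabs (RInt f1 (- d') (- d)) <= Rabs (- d - - d') * B).
    { apply RInt_abs_bound; auto. intros x [Hx1 Hx2].
      assert (Hx : - r <= x <= 0).
      { split.
        - eapply Rle_trans; [|exact Hx1]. apply Rmin_glb; lra.
        - eapply Rle_trans; [exact Hx2|]. apply Rmax_lub; lra. }
      destruct (Hpt x Hx) as [P1 [P2 _]].
      unfold f1, B. rewrite Rabs_mult. rewrite Rmult_comm.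
      rewrite (Rmult_comm Mv1). apply Rmult_le_compat; auto; apply Rabs_pos. }
    assert (B2 : Rabs (RInt (fun s => f1 s - f0 s) (- d) 0) <= Rabs (0 - - d) * (e / (2 * r))).
    { apply RInt_abs_bound.
      { intros x. apply (continuous_minus f1 f0); auto. }
      intros x Hx. rewrite Rmin_left in Hx by lra. rewrite Rmax_right in Hx by lra.
      destruct (Hpt x ltac:(lra)) as [P1 [P2 [P3 [P4 P5]]]].
      unfold f1, f0.
      replace (Derive v (psi x) * omega x - Derive v (phi x) * chi x) with
        ((Derive v (psi x) - Derive v (phi x)) * omega x + Derive v (phi x) * (omega x - chi x)) by ring.
      eapply Rle_trans; [apply Rabs_triang|]. rewrite !Rabs_mult.
      assert (Q1 : Rabs (Derive v (psi x) - Derive v (phi x)) * Rabs (omega x) <= e / (4 * r)).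
      { replace (e / (4 * r)) with (e / (4 * r * (Mchi + 1)) * (Mchi + 1)) by (field; lra).
        apply Rmult_le_compat; try apply Rabs_pos; lra. }
      assert (Q2 : Rabs (Derive v (phi x)) * Rabs (omega x - chi x) <= e / (4 * r)).
      { replace (e / (4 * r)) with ((Mv1 + 1) * e2) by (unfold e2; field; lra).
        apply Rmult_le_compat; try apply Rabs_pos; lra. }
      replace (e / (2 * r)) with (e / (4 * r) + e / (4 * r)) by (field; lra). lra. }
    rewrite Mi in B2. rewrite <- Ch.
    replace (RInt f1 (- d') (- d) + RInt f1 (- d) 0 - RInt f0 (- d) 0) with
      (RInt f1 (- d') (- d) + (RInt f1 (- d) 0 - RInt f0 (- d) 0)) by ring.
    eapply Rle_lt_trans; [apply Rabs_triang|].
    replace (0 - - d) with d in B2 by ring. rewrite (Rabs_right d) in B2 by lra.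
    replace (- d - - d') with (d' - d) in B1 by ring.
    assert (T1 : Rabs (d' - d) * B < e / 2).
    { apply Rle_lt_trans with (e / (2 * (B + 1)) * B).
      - apply Rmult_le_compat_r; lra.
      - replace (e / 2) with (e / (2 * (B + 1)) * (B + 1)) by (field; lra).
        apply Rmult_lt_compat_l; lra. }
    assert (T2 : d * (e / (2 * r)) < e / 2).
    { replace (e / 2) with (r * (e / (2 * r))) by (field; lra).
      apply Rmult_lt_compat_r; auto. apply Rdiv_lt_0_compat; lra. }
    lra. }
  assert (Lim : filterlim (fun p => DeE v delta (fst p) (snd p)) F (locally (DeE v delta phi chi))).
  { unfold DeE, Ddelta, Rdiv. apply lim_minus; [exact L1|]. apply lim_mult; [exact L2|].
    apply lim_mult. apply lim_opp. exact LI. apply lim_inv.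
    - pose proof (hvb (phi (- delta phi))). lra.
    - exact L4. }
  destruct (proj1 (filterlim_locally _ _) Lim (mkposreal eps Heps)) as [eta [Heta H]].
  exists eta. split; [exact Heta|]. intros psi omega H1 H2 H3 H4. apply (H psi omega); auto.
Qed.
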